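(* Let $n\in\mathbb{N}$, $\mathcal{P}_n,\mathcal{E}_n\subseteq\mathcal{D}(\mathcal{H}^{\otimes n})$, and $r>0$. Then $\overline{\zeta}_{\mathrm{GPO},r}(\mathcal{P}_n,\mathcal{E}_n)=\alpha_{n,r}(\mathcal{P}_n\|\mathcal{E}_n)$.
   Context: $\mathcal{H}$ is finite-dimensional; $\mathcal{D}$ denotes density operators; $T(X,Y)=\tfrac12\|X-Y\|_1$. Battery: qubit with basis $\{|0\rangle,|1\rangle\}$, $\pi_M=(1-\tfrac1M)|0\rangle\langle0|+\tfrac1M|1\rangle\langle1|$, $\Pi_M=\{\pi_{M'}:M'\in[M,\infty)\}$. The optimal error of dirty-battery work extraction at rate $r$ is $\overline{\zeta}_{\mathrm{GPO},r}(\mathcal{P}_n,\mathcal{E}_n)=\inf\{\varepsilon\in[0,1]:\exists\text{ CPTP }\mathcal{F}_n\text{ with }T(\mathcal{F}_n(\rho),|1\rangle\langle1|)\le\varepsilon\ \forall\rho\in\mathcal{P}_n\text{ and }\mathcal{F}_n(\tau)\in\Pi_{2^{nr}}\ \forall\tau\in\mathcal{E}_n\}$. The optimal type-I error is $\alpha_{n,r}(\mathcal{P}_n\|\mathcal{E}_n)=\inf\{\sup_{\rho\in\mathcal{P}_n}\operatorname{tr}[(I-E)\rho]:0\le E\le I,\ \sup_{\tau\in\mathcal{E}_n}\operatorname{tr}[E\tau]\le2^{-nr}\}$. *)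

(* Defs.v *)
From HB Require Import structures.
From mathcomp Require Import all_boot all_order all_algebra.
From mathcomp Require Import complex.
From mathcomp Require Import classical_sets boolp reals exp.

Set Implicit Arguments.
Unset Strict Implicit.
Unset Printing Implicit Defensive.

Import Order.TTheory GRing.Theory Num.Theory.
Local Open Scope ring_scope.
Local Open Scope classical_set_scope.

Section QDefs.
Variable R : realType.
Local Notation C := R[i].

Definition adjmx (m n : nat) (A : 'M[C]_(m, n)) : 'M[C]_(n, m) :=
  (map_mx Num.conj A)^T.

Definition psdmx (N : nat) (A : 'M[C]_N) : Prop :=
  adjmx A = A /\ forall v : 'cV[C]_N, 0 <= (adjmx v *m A *m v) 0 0.

Definition lownerle (N : nat) (A B : 'M[C]_N) : Prop := psdmx (B - A).

Definition density (N : nat) : set 'M[C]_N :=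
  [set rho | psdmx rho /\ \tr rho = 1].

Definition psd_sqrt (N : nat) (M : 'M[C]_N) : 'M[C]_N :=
  xget 0 [set B | psdmx B /\ B *m B = M].

Definition trnorm (N : nat) (A : 'M[C]_N) : R :=
  complex.Re (\tr (psd_sqrt (adjmx A *m A))).

Definition tdist (N : nat) (X Y : 'M[C]_N) : R := trnorm (X - Y) / 2.

(* Ampliation id_k (x) F of a map F : M_N -> M_M, acting on M_(k*N) with
   block (i,j) of X (i,j < k) given by entries X (mxvec_index i a) (mxvec_index j b). *)
Definition ampl (k N M : nat) (F : 'M[C]_N -> 'M[C]_M) (X : 'M[C]_(k * N))
    : 'M[C]_(k * M) :=
  \matrix_(p, q) \sum_(i < k) \sum_(j < k) \sum_(a < M) \sum_(b < M)
     (if (p == mxvec_index i a) && (q == mxvec_index j b) then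
        F (\matrix_(a', b') X (mxvec_index i a') (mxvec_index j b')) a b
      else 0).

Definition cptp (N M : nat) (F : {linear 'M[C]_N -> 'M[C]_M}) : Prop :=
  (forall (k : nat) (X : 'M[C]_(k * N)), psdmx X -> psdmx (@ampl k N M F X)) /\
  (forall X : 'M[C]_N, \tr (F X) = \tr X).

(* Battery qubit: |0> = ord0, |1> = ord_max. *)
Definition ket1proj : 'M[C]_2 := delta_mx ord_max ord_max.

Definition battery_pi (M : R) : 'M[C]_2 :=
  \matrix_(i, j) (if i == j then
                    (if i == ord0 then Complex (1 - M^-1) 0 else Complex (M^-1) 0)
                  else 0).

Definition battery_Pi (M : R) : set 'M[C]_2 :=
  [set A | exists M' : R, M <= M' /\ A = battery_pi M'].

(* Optimal error of dirty-battery work extraction at rate r. *)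
Definition zeta_GPO (N n : nat) (r : R) (P E : set 'M[C]_N) : R :=
  inf [set eps : R | 0 <= eps <= 1 /\
    exists F : {linear 'M[C]_N -> 'M[C]_2}, cptp F /\
      (forall rho, P rho -> tdist (F rho) ket1proj <= eps) /\
      (forall tau, E tau -> battery_Pi (2 `^ (n%:R * r)) (F tau))].

Definition alpha_err (N n : nat) (r : R) (P E : set 'M[C]_N) : R :=
  inf [set t : R | exists Em : 'M[C]_N,
    lownerle 0 Em /\ lownerle Em 1%:M /\
    (forall tau, E tau -> complex.Re (\tr (Em *m tau)) <= 2 `^ (- (n%:R * r))) /\
    t = sup [set complex.Re (\tr ((1%:M - Em) *m rho)) | rho in P]].

End QDefs.

(* Main.v *)
Require Import Defs.
From HB Require Import structures.
From mathcomp Require Import all_boot all_order all_algebra.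
From mathcomp Require Import complex.
From mathcomp Require Import classical_sets boolp reals exp.
From mathcomp Require Import sesquilinear spectral ring lra.
Set Implicit Arguments.
Unset Strict Implicit.
Unset Printing Implicit Defensive.
Import Order.TTheory GRing.Theory Num.Theory.
Local Open Scope ring_scope.
Local Open Scope classical_set_scope.
Local Open Scope sesquilinear_scope.
Section S. Variable R : realType.
Local Notation C := R[i].
Implicit Types (N : nat).

Definition qf N (A : 'M[C]_N) (v : 'cV[C]_N) : C := (adjmx v *m A *m v) 0 0.

Lemma adjmxE m n (A : 'M[C]_(m,n)) i j : adjmx A i j = (A j i)^*.
Proof. by rewrite !mxE. Qed.
Lemma adjmxK m n (A : 'M[C]_(m,n)) : adjmx (adjmx A) = A.
Proof. by apply/matrixP=> i j; rewrite !mxE conjCK. Qed.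
Lemma adjmxM m n p (A : 'M[C]_(m,n)) (B : 'M[C]_(n,p)) :
  adjmx (A *m B) = adjmx B *m adjmx A.
Proof. by rewrite /adjmx map_mxM trmx_mul. Qed.
Lemma adjmxD m n (A B : 'M[C]_(m,n)) : adjmx (A + B) = adjmx A + adjmx B.
Proof. by apply/matrixP=> i j; rewrite !mxE rmorphD. Qed.
Lemma adjmxN m n (A : 'M[C]_(m,n)) : adjmx (- A) = - adjmx A.
Proof. by apply/matrixP=> i j; rewrite !mxE rmorphN. Qed.
Lemma adjmxB m n (A B : 'M[C]_(m,n)) : adjmx (A - B) = adjmx A - adjmx B.
Proof. by rewrite adjmxD adjmxN. Qed.
Lemma adjmxZ m n c (A : 'M[C]_(m,n)) : adjmx (c *: A) = c^* *: adjmx A.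
Proof. by apply/matrixP=> i j; rewrite !mxE rmorphM. Qed.
Lemma adjmx1 N : adjmx (1%:M : 'M[C]_N) = 1%:M.
Proof. by apply/matrixP=> i j; rewrite !mxE eq_sym; case: eqP => _; rewrite ?conjC1 ?conjC0. Qed.
Lemma adjmx0 m n : adjmx (0 : 'M[C]_(m,n)) = 0.
Proof. by apply/matrixP=> i j; rewrite !mxE conjC0. Qed.
Lemma tr_adjmx N (A : 'M[C]_N) : \tr (adjmx A) = (\tr A)^*.
Proof. by rewrite /adjmx mxtrace_tr trace_map_mx. Qed.

Lemma qfE N (A : 'M[C]_N) v :
  qf A v = \sum_p \sum_q (v p 0)^* * A p q * v q 0.
Proof.
rewrite /qf mxE; under eq_bigr => q _ do rewrite mxE mulr_suml.
rewrite exchange_big /=; apply: eq_bigr => p _; apply: eq_bigr => q _.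
by rewrite !mxE.
Qed.

Lemma tr1 (A : 'M[C]_1) : \tr A = A 0 0.
Proof. by rewrite /mxtrace big_ord1. Qed.

Lemma qf_tr N (A : 'M[C]_N) v : qf A v = \tr (A *m (v *m adjmx v)).
Proof. by rewrite /qf -tr1 -mulmxA mxtrace_mulC mulmxA. Qed.

Lemma psd_herm N (A : 'M[C]_N) : psdmx A -> adjmx A = A.
Proof. by case. Qed.
Lemma psd_qf N (A : 'M[C]_N) v : psdmx A -> 0 <= qf A v.
Proof. by case=> _; apply. Qed.
Lemma psdP N (A : 'M[C]_N) : adjmx A = A -> (forall v, 0 <= qf A v) -> psdmx A.
Proof. by split. Qed.

Lemma qf_delta N (A : 'M[C]_N) i : qf A (delta_mx i 0) = A i i.
Proof.
rewrite qfE (bigD1 i) //= [X in _ + X]big1 ?addr0.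
  rewrite (bigD1 i) //= [X in _ + X]big1 ?addr0; first by rewrite !mxE !eqxx /= conjC1 mulr1 mul1r.
  by move=> j /negbTE ji; rewrite !mxE ji /= mulr0.
by move=> j /negbTE ji; rewrite big1 // => k _; rewrite !mxE ji /= conjC0 !mul0r.
Qed.

Lemma psd_diag N (A : 'M[C]_N) i : psdmx A -> 0 <= A i i.
Proof. by move=> /(psd_qf (delta_mx i 0)); rewrite qf_delta. Qed.

Lemma qfD N (A B : 'M[C]_N) v : qf (A + B) v = qf A v + qf B v.
Proof. by rewrite /qf mulmxDr mulmxDl mxE. Qed.
Lemma qfZ N c (A : 'M[C]_N) v : qf (c *: A) v = c * qf A v.
Proof. by rewrite /qf -scalemxAr -scalemxAl mxE. Qed.
Lemma qfN N (A : 'M[C]_N) v : qf (- A) v = - qf A v.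
Proof. by rewrite /qf mulmxN mulNmx mxE. Qed.
Lemma qfB N (A B : 'M[C]_N) v : qf (A - B) v = qf A v - qf B v.
Proof. by rewrite qfD qfN. Qed.

Lemma psdD N (A B : 'M[C]_N) : psdmx A -> psdmx B -> psdmx (A + B).
Proof.
move=> hA hB; split; first by rewrite adjmxD !psd_herm.
by move=> v; change (0 <= qf (A + B) v); rewrite qfD addr_ge0 //; apply: psd_qf.
Qed.
Lemma psdZ N c (A : 'M[C]_N) : 0 <= c -> psdmx A -> psdmx (c *: A).
Proof.
move=> c0 hA; split; first by rewrite adjmxZ psd_herm // geC0_conj.
by move=> v; change (0 <= qf (c *: A) v); rewrite qfZ mulr_ge0 //; apply: psd_qf.
Qed.
Lemma psd0 N : psdmx (0 : 'M[C]_N).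
Proof. split; first exact: adjmx0. by move=> v; rewrite /qf mulmx0 mul0mx mxE. Qed.

Lemma qf_outer N (u v : 'cV[C]_N) :
  qf (u *m adjmx u) v = (adjmx v *m u) 0 0 * ((adjmx v *m u) 0 0)^*.
Proof.
rewrite /qf; have -> : adjmx v *m (u *m adjmx u) *m v = (adjmx v *m u) *m (adjmx u *m v).
  by rewrite !mulmxA.
rewrite mxE big_ord1; congr (_ * _).
by rewrite -{1}[v]adjmxK -adjmxM adjmxE.
Qed.

Lemma psd_outer N (u : 'cV[C]_N) : psdmx (u *m adjmx u).
Proof.
split; first by rewrite adjmxM adjmxK.
by move=> v; change (0 <= qf (u *m adjmx u) v); rewrite qf_outer mul_conjC_ge0.
Qed.

Lemma psd1 N : psdmx (1%:M : 'M[C]_N).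
Proof.
split; first exact: adjmx1.
move=> v; rewrite /qf mulmx1 mxE sumr_ge0 // => i _; rewrite !mxE mulrC.
exact: mul_conjC_ge0.
Qed.


Lemma adj_tstar m n (A : 'M[C]_(m,n)) : A ^t* = adjmx A.
Proof. by rewrite /adjmx map_trmx. Qed.

Lemma conj_diag N (P X : 'M[C]_N) i :
  (P *m X *m adjmx P) i i = qf X (adjmx (row i P)).
Proof.
rewrite qfE !mxE; under eq_bigr => k _ do rewrite !mxE mulr_suml.
rewrite exchange_big /=; apply: eq_bigr => p _; apply: eq_bigr => q _.
by rewrite !mxE conjCK.
Qed.

Lemma psd_hermsym N (A : 'M[C]_N) : psdmx A -> A \is hermsymmx.
Proof.
move=> /psd_herm hA; apply/is_hermitianmxP; rewrite expr0 scale1r.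
by rewrite -map_trmx -/(adjmx A) hA.
Qed.

Lemma tr_psd N (A B : 'M[C]_N) : psdmx A -> psdmx B -> 0 <= \tr (A *m B).
Proof.
move=> pA pB.
have /orthomx_spectralP eA := hermitian_normalmx (psd_hermsym pA).
have uP := spectral_unitarymx A.
move: eA; set P := spectralmx A; set D := spectral_diag A => eA.
rewrite invmx_unitary // adj_tstar in eA.
have PP : P *m adjmx P = 1%:M by rewrite -adj_tstar; apply/unitarymxP.
have eD : P *m A *m adjmx P = diag_mx D.
  by rewrite eA !mulmxA PP mul1mx -mulmxA PP mulmx1.
have -> : \tr (A *m B) = \tr ((P *m B *m adjmx P) *m diag_mx D).
  by rewrite eA -!mulmxA mxtrace_mulC !mulmxA [RHS]mxtrace_mulC !mulmxA.
rewrite mul_mx_diag /mxtrace; apply: sumr_ge0 => i _; rewrite mxE.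
apply: mulr_ge0; first by rewrite conj_diag; apply: psd_qf.
have -> : D 0 i = diag_mx D i i by rewrite mxE eqxx.
by rewrite -eD conj_diag; apply: psd_qf.
Qed.


Lemma idx_eq k N (i i' : 'I_k) (a a' : 'I_N) :
  (mxvec_index i a == mxvec_index i' a') = (i == i') && (a == a').
Proof.
apply/eqP/andP => [e|[/eqP-> /eqP->]] //.
have [f fK _] := curry_mxvec_bij k N.
have := fK (i, a) isT; have := fK (i', a') isT; rewrite /= -e => -> [-> ->].
by rewrite !eqxx.
Qed.

Lemma sum_mxvec k N (f : 'I_(k * N) -> C) :
  \sum_p f p = \sum_i \sum_a f (mxvec_index i a).
Proof.
rewrite (reindex (uncurry (@mxvec_index k N))) /=; last exact: curry_mxvec_bij.
by rewrite pair_big /=; apply: eq_bigr => -[i a].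
Qed.

Definition blk k N (X : 'M[C]_(k * N)) (i j : 'I_k) : 'M[C]_N :=
  \matrix_(a', b') X (mxvec_index i a') (mxvec_index j b').

Lemma amplE k N M (F : 'M[C]_N -> 'M[C]_M) (X : 'M[C]_(k * N)) i a j b :
  ampl F X (mxvec_index i a) (mxvec_index j b) = F (blk X i j) a b.
Proof.
rewrite mxE (bigD1 i) //= [X in _ + X]big1 ?addr0 => [|i' ni]; last first.
  have nii : (i == i') = false by apply/eqP => e; rewrite e eqxx in ni.
  by rewrite big1 // => j' _; rewrite big1 // => a' _; rewrite big1 // => b' _;
    rewrite idx_eq nii.
rewrite (bigD1 j) //= [X in _ + X]big1 ?addr0 => [|j' nj]; last first.
  have njj : (j == j') = false by apply/eqP => e; rewrite e eqxx in nj.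
  by rewrite big1 // => a' _; rewrite big1 // => b' _;
    rewrite [X in _ && X]idx_eq njj andbF.
rewrite (bigD1 a) //= [X in _ + X]big1 ?addr0 => [|a' na]; last first.
  have naa : (a == a') = false by apply/eqP => e; rewrite e eqxx in na.
  by rewrite big1 // => b' _; rewrite idx_eq naa andbF.
rewrite (bigD1 b) //= [X in _ + X]big1 ?addr0 => [|b' nb]; last first.
  have nbb : (b == b') = false by apply/eqP => e; rewrite e eqxx in nb.
  by rewrite [X in _ && X]idx_eq nbb andbF andbF.
by rewrite !eqxx.
Qed.


Lemma qf_mxvec k N (A : 'M[C]_(k * N)) v : qf A v =
  \sum_i \sum_a \sum_j \sum_b (v (mxvec_index i a) 0)^* *
     A (mxvec_index i a) (mxvec_index j b) * v (mxvec_index j b) 0.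
Proof.
rewrite qfE sum_mxvec; apply: eq_bigr => i _; apply: eq_bigr => a _.
by rewrite sum_mxvec.
Qed.

Lemma hermP N (A : 'M[C]_N) : (forall i j, (A j i)^* = A i j) -> adjmx A = A.
Proof. by move=> h; apply/matrixP => i j; rewrite !mxE h. Qed.

Lemma herm_entry N (A : 'M[C]_N) i j : adjmx A = A -> (A j i)^* = A i j.
Proof. by move=> /matrixP /(_ i j); rewrite !mxE. Qed.

Lemma hermP_mxvec k N (A : 'M[C]_(k * N)) :
  (forall i a j b, (A (mxvec_index j b) (mxvec_index i a))^* =
                    A (mxvec_index i a) (mxvec_index j b)) -> adjmx A = A.
Proof.
move=> h; apply: hermP => p q.
by case/mxvec_indexP: p => i a; case/mxvec_indexP: q => j b; apply: h.
Qed.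

Definition sndi k N (p : 'I_(k * N)) : 'I_N :=
  (enum_val (cast_ord (esym (mxvec_cast k N)) p)).2.

Lemma sndiE k N (i : 'I_k) (a : 'I_N) : sndi (mxvec_index i a) = a.
Proof. by rewrite /sndi /mxvec_index cast_ordK enum_rankK. Qed.

Lemma cp_pos N M (F : {linear 'M[C]_N -> 'M[C]_M}) (Y : 'M[C]_N) :
  cptp F -> psdmx Y -> psdmx (F Y).
Proof.
move=> [cp _] pY.
pose X : 'M[C]_(1 * N) := \matrix_(p, q) Y (sndi p) (sndi q).
have pX : psdmx X.
  apply: psdP.
    by apply: hermP => p q; rewrite !mxE herm_entry //; apply: psd_herm.
  move=> v; rewrite qf_mxvec big_ord1.
  under eq_bigr => a _ do rewrite big_ord1.
  set S := (X in 0 <= X).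
  have <- : qf Y (\col_a v (mxvec_index ord0 a) 0) = S.
    rewrite qfE /S; apply: eq_bigr => a _; apply: eq_bigr => b _.
    by rewrite !mxE !sndiE.
  exact: psd_qf.
have eY : blk X ord0 ord0 = Y by apply/matrixP => a b; rewrite !mxE !sndiE.
have pA := cp 1%N X pX.
have eF : F Y = \matrix_(a, b) ampl F X (mxvec_index ord0 a) (mxvec_index ord0 b).
  by apply/matrixP => a b; rewrite mxE amplE eY.
rewrite eF; move: pA; set A := ampl F X => pA; clearbody A; apply: psdP.
  by apply: hermP => a b; rewrite !mxE herm_entry //; apply: psd_herm.
move=> v; have := psd_qf (\col_p v (sndi p) 0) pA; rewrite qf_mxvec big_ord1.
under eq_bigr => a _ do rewrite big_ord1.
set S := (X in 0 <= X -> _); have -> : S = qf (\matrix_(a, b) A (mxvec_index ord0 a) (mxvec_index ord0 b)) v.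
  rewrite qfE /S; apply: eq_bigr => a _; apply: eq_bigr => b _.
  by rewrite !mxE !sndiE.
by [].
Qed.


Definition fsti k N (p : 'I_(k * N)) : 'I_k :=
  (enum_val (cast_ord (esym (mxvec_cast k N)) p)).1.

Lemma fstiE k N (i : 'I_k) (a : 'I_N) : fsti (mxvec_index i a) = i.
Proof. by rewrite /fsti /mxvec_index cast_ordK enum_rankK. Qed.

Lemma trE N (A B : 'M[C]_N) : \tr (A *m B) = \sum_c \sum_e A c e * B e c.
Proof. by apply: eq_bigr => c _; rewrite mxE. Qed.

Lemma tr_herm_adj N (B Y : 'M[C]_N) :
  adjmx B = B -> \tr (B *m adjmx Y) = (\tr (B *m Y))^*.
Proof.
move=> hB; rewrite -tr_adjmx adjmxM hB mxtrace_mulC.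
by [].
Qed.

Lemma blk_adj k N (X : 'M[C]_(k * N)) i j :
  adjmx X = X -> blk X j i = adjmx (blk X i j).
Proof. by move=> hX; apply/matrixP => a b; rewrite !mxE herm_entry. Qed.

Lemma blk_psd_sum k N (B : 'M[C]_N) (X : 'M[C]_(k * N)) (w : 'I_k -> C) :
  psdmx B -> psdmx X ->
  0 <= \sum_i \sum_j (w i)^* * \tr (B *m blk X i j) * w j.
Proof.
move=> pB pX.
pose G : 'M[C]_(k * N) :=
  \matrix_(p, q) (w (fsti p) * (w (fsti q))^* * B (sndi p) (sndi q)).
have pG : psdmx G.
  apply: psdP.
    apply: hermP => p q; rewrite !mxE !rmorphM /= conjCK herm_entry; last exact: psd_herm.
    ring.
  move=> u; rewrite qf_mxvec.
  pose z : 'cV[C]_N := \col_c \sum_i (w i)^* * u (mxvec_index i c) 0.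
  suff -> : \sum_i \sum_a \sum_j \sum_b (u (mxvec_index i a) 0)^* *
     G (mxvec_index i a) (mxvec_index j b) * u (mxvec_index j b) 0 = qf B z.
    exact: psd_qf.
  rewrite qfE exchange_big /=; apply: eq_bigr => a _.
  under eq_bigr => i _ do rewrite exchange_big /=.
  rewrite exchange_big /=; apply: eq_bigr => b _.
  rewrite !mxE rmorph_sum !mulr_suml; apply: eq_bigr => i _.
  rewrite mulr_sumr; apply: eq_bigr => j _.
  rewrite !mxE !fstiE !sndiE rmorphM /= conjCK.
  ring.
have := tr_psd pG pX.
suff -> : \tr (G *m X) = \sum_i \sum_j (w i)^* * \tr (B *m blk X i j) * w j by [].
rewrite /mxtrace sum_mxvec.
under eq_bigr => j _ do under eq_bigr => c _ do rewrite mxE sum_mxvec.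
under eq_bigr => j _ do rewrite exchange_big /=.
rewrite exchange_big /=; apply: eq_bigr => i _; apply: eq_bigr => j _.
rewrite mulr_sumr mulr_suml; apply: eq_bigr => c _.
rewrite mxE mulr_sumr mulr_suml; apply: eq_bigr => e _.
rewrite !mxE !fstiE !sndiE.
ring.
Qed.


Definition mpmap N (B0 B1 : 'M[C]_N) (X : 'M[C]_N) : 'M[C]_2 :=
  \matrix_(a, b) (if a == b then \tr ((if a == ord0 then B0 else B1) *m X) else 0).

Lemma mp_lin N (B0 B1 : 'M[C]_N) : linear (mpmap B0 B1).
Proof.
move=> c X Y; apply/matrixP => a b; rewrite !mxE; case: eqP => _.
  by rewrite mulmxDr -scalemxAr linearD linearZ.
by rewrite mulr0 addr0.
Qed.

Lemma sum_delta_mid (I : finType) (a : I) (x : C) (t y : I -> C) :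
  \sum_b x * (if a == b then t b else 0) * y b = x * t a * y a.
Proof.
rewrite (bigD1 a) //= eqxx [X in _ + X]big1 ?addr0 // => b nb.
by rewrite eq_sym (negbTE nb) mulr0 mul0r.
Qed.

Lemma mp_cp N (B0 B1 : 'M[C]_N) k (X : 'M[C]_(k * N)) :
  psdmx B0 -> psdmx B1 -> psdmx X -> psdmx (ampl (mpmap B0 B1) X).
Proof.
move=> p0 p1 pX.
have pB : forall a : 'I_2, psdmx (if a == ord0 then B0 else B1) by move=> a; case: ifP.
apply: psdP.
  apply: hermP_mxvec => i a j b; rewrite !amplE !mxE.
  case: (eqVneq a b) => [<-|nab]; last by rewrite conjC0.
  by rewrite (blk_adj _ _ (psd_herm pX)) tr_herm_adj ?conjCK //; apply: psd_herm.
move=> v; rewrite qf_mxvec.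
under eq_bigr => i _ do under eq_bigr => a _ do under eq_bigr => j _ do
  under eq_bigr => b _ do rewrite amplE mxE.
rewrite exchange_big /=; apply: sumr_ge0 => a _.
have := blk_psd_sum (fun i => v (mxvec_index i a) 0) (pB a) pX.
set S := (X in 0 <= X -> _); set T := (X in _ -> 0 <= X).
suff -> : T = S by [].
apply: eq_bigr => i _; apply: eq_bigr => j _.
rewrite (bigD1 a) //= eqxx [X in _ + X]big1 ?addr0 // => b nb.
by rewrite eq_sym (negbTE nb) mulr0 mul0r.
Qed.


Local Notation i0 := (ord0 : 'I_2).
Local Notation i1 := (ord_max : 'I_2).

Lemma I2P (i : 'I_2) : i = i0 \/ i = i1.
Proof. by case: i => -[|[|//]] H; [left|right]; apply: val_inj. Qed.

Lemma sum2 (f : 'I_2 -> C) : \sum_i f i = f i0 + f i1.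
Proof.
rewrite big_ord_recl big_ord1; congr (_ + f _); exact: val_inj.
Qed.

Lemma mx2P (A B : 'M[C]_2) :
  A i0 i0 = B i0 i0 -> A i0 i1 = B i0 i1 -> A i1 i0 = B i1 i0 ->
  A i1 i1 = B i1 i1 -> A = B.
Proof.
move=> h00 h01 h10 h11; apply/matrixP => i j.
by case: (I2P i) => ->; case: (I2P j) => ->.
Qed.

Lemma mul2E (A B : 'M[C]_2) i j : (A *m B) i j = A i i0 * B i0 j + A i i1 * B i1 j.
Proof. by rewrite mxE sum2. Qed.

Lemma tr2E (A : 'M[C]_2) : \tr A = A i0 i0 + A i1 i1.
Proof. by rewrite /mxtrace sum2. Qed.

Lemma scal1E (c : C) (i j : 'I_2) : (c *: 1%:M : 'M[C]_2) i j = if i == j then c else 0.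
Proof. by rewrite !mxE; case: eqP => _; rewrite ?mulr1 ?mulr0. Qed.

Lemma i01 : (i0 == i1) = false. Proof. by []. Qed.
Lemma i10 : (i1 == i0) = false. Proof. by []. Qed.

Lemma psd_sqrt_scalar (s : C) : 0 <= s ->
  psd_sqrt (s *: 1%:M : 'M[C]_2) = sqrtC s *: 1%:M.
Proof.
move=> s0.
have ex : exists B : 'M[C]_2, psdmx B /\ B *m B = s *: 1%:M.
  exists (sqrtC s *: 1%:M); split; first by apply: psdZ; [rewrite sqrtC_ge0|apply: psd1].
  by rewrite -scalemxAl -scalemxAr mul1mx scalerA -expr2 sqrtCK.
have [pB BB] := xgetPex 0 ex.
rewrite /psd_sqrt; move: pB BB; set B := xget _ _ => pB BB; clearbody B.
have hB := psd_herm pB.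
have x0 := psd_diag i0 pB; have z0 := psd_diag i1 pB.
have e10 : B i1 i0 = (B i0 i1)^* by rewrite herm_entry.
have e00 : (B *m B) i0 i0 = (s *: 1%:M : 'M[C]_2) i0 i0 by rewrite BB.
have e11 : (B *m B) i1 i1 = (s *: 1%:M : 'M[C]_2) i1 i1 by rewrite BB.
have e01 : (B *m B) i0 i1 = (s *: 1%:M : 'M[C]_2) i0 i1 by rewrite BB.
rewrite !mul2E !scal1E !eqxx i01 e10 in e00 e11 e01.
case: (eqVneq (B i0 i1) 0) => [y0|yn0].
  rewrite y0 conjC0 mulr0 addr0 in e00; rewrite y0 conjC0 mul0r add0r in e11.
  apply: mx2P; rewrite scal1E ?eqxx ?i01 ?i10 //.
  - by rewrite -e00 -expr2 sqrCK.
  - by rewrite e10 y0 conjC0.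
  - by rewrite -e11 -expr2 sqrCK.
have xz : B i0 i0 + B i1 i1 = 0.
  by move: e01; rewrite [B i0 i0 * _]mulrC -mulrDr => /eqP; rewrite mulf_eq0 (negbTE yn0) /= => /eqP.
have bx : B i0 i0 = 0.
  apply/eqP; rewrite eq_le x0 andbT.
  have -> : B i0 i0 = - B i1 i1 by apply/eqP; rewrite -addr_eq0 xz.
  by rewrite oppr_le0.
have bz : B i1 i1 = 0 by move: xz; rewrite bx add0r.
pose v : 'cV[C]_2 := \col_i (if i == i0 then 1 else - (B i0 i1)^*).
have := psd_qf v pB; rewrite qfE !sum2 !mxE /= e10 bx bz.
rewrite conjC1 !mul1r mulr0 !mul0r !add0r addr0 rmorphN /= conjCK.
rewrite mulr1 mulrN mulNr -opprD oppr_ge0 => h.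
have h2 : 0 <= B i0 i1 * (B i0 i1)^* by apply: mul_conjC_ge0.
have : B i0 i1 * (B i0 i1)^* = 0.
  apply/eqP; rewrite eq_le h2 andbT.
  by apply: le_trans h; rewrite lerDr.
by move/eqP; rewrite mulf_eq0 conjC_eq0 orbb (negbTE yn0).
Qed.


Lemma herm_traceless_sq (A : 'M[C]_2) : adjmx A = A -> \tr A = 0 ->
  adjmx A *m A = (A i0 i0 * A i0 i0 + A i0 i1 * (A i0 i1)^*) *: 1%:M.
Proof.
move=> hA tA; rewrite hA.
have e10 : A i1 i0 = (A i0 i1)^* by rewrite herm_entry.
have e11 : A i1 i1 = - A i0 i0 by apply/eqP; rewrite -addr_eq0 addrC -tr2E tA.
apply: mx2P; rewrite mul2E scal1E ?eqxx ?i01 ?i10 ?e10 ?e11 /=; ring.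
Qed.

Lemma sq_real_ge0 (x : C) : x^* = x -> 0 <= x * x.
Proof. by move=> e; rewrite -{2}e mul_conjC_ge0. Qed.

Lemma tdist_formula (G : 'M[C]_2) : adjmx G = G -> \tr G = 1 ->
  tdist G (ket1proj R) = complex.Re (sqrtC (G i0 i0 * G i0 i0 + G i0 i1 * (G i0 i1)^*)).
Proof.
move=> hG tG.
set A := G - ket1proj R.
have hA : adjmx A = A.
  rewrite /A adjmxB hG; congr (_ - _); apply: hermP => i j.
  by rewrite !mxE; case: (i == _); case: (j == _); rewrite /= ?conjC1 ?conjC0.
have tA : \tr A = 0.
  by rewrite /A linearB /= tG /ket1proj tr2E !mxE /= add0r subrr.
have A00 : A i0 i0 = G i0 i0 by rewrite /A !mxE /= subr0.
have A01 : A i0 i1 = G i0 i1 by rewrite /A !mxE /= subr0.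
rewrite /tdist /trnorm herm_traceless_sq // A00 A01 psd_sqrt_scalar; last first.
  apply: addr_ge0; last exact: mul_conjC_ge0.
  by apply: sq_real_ge0; rewrite herm_entry.
rewrite scalemx1 mxtrace_scalar raddfMn /=.
set x := complex.Re _; by rewrite -[x *+ 2]mulr_natr mulfK // pnatr_eq0.

Qed.


Lemma leC_Re (x y : C) : x <= y -> complex.Re x <= complex.Re y.
Proof. by rewrite lecE => /andP[]. Qed.

Lemma tdist_lb (G : 'M[C]_2) : psdmx G -> \tr G = 1 ->
  complex.Re (G i0 i0) <= tdist G (ket1proj R).
Proof.
move=> pG tG; rewrite tdist_formula //; last exact: psd_herm.
apply: leC_Re.
have g0 := psd_diag i0 pG.
rewrite -{1}(sqrCK g0) expr2.
have s0 : 0 <= G i0 i0 * G i0 i0 by apply: mulr_ge0.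
rewrite ler_sqrtC ?nnegrE //; last by apply: addr_ge0 => //; apply: mul_conjC_ge0.
by rewrite lerDl mul_conjC_ge0.
Qed.

Lemma tdist_diag (G : 'M[C]_2) : G i0 i1 = 0 -> G i1 i0 = 0 ->
  0 <= G i0 i0 -> 0 <= G i1 i1 -> \tr G = 1 ->
  tdist G (ket1proj R) = complex.Re (G i0 i0).
Proof.
move=> g01 g10 g0 g1 tG.
rewrite tdist_formula //; last first.
  apply: hermP => i j; case: (I2P i) => ->; case: (I2P j) => ->;
  by rewrite ?g01 ?g10 ?conjC0 ?geC0_conj.
by rewrite g01 mul0r addr0 -expr2 sqrCK.
Qed.

Lemma tr_adj_herm N (E X : 'M[C]_N) : adjmx X = X ->
  \tr (adjmx E *m X) = (\tr (E *m X))^*.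
Proof. by move=> hX; rewrite -{1}hX -adjmxM tr_adjmx mxtrace_mulC. Qed.

Definition Emat N (F : 'M[C]_N -> 'M[C]_2) : 'M[C]_N :=
  \matrix_(i, j) F (delta_mx j i) i1 i1.

Lemma tr_Emat N (F : {linear 'M[C]_N -> 'M[C]_2}) X :
  \tr (Emat F *m X) = F X i1 i1.
Proof.
rewrite {2}(matrix_sum_delta X) linear_sum summxE trE exchange_big /=.
apply: eq_bigr => j _; rewrite linear_sum summxE; apply: eq_bigr => i _.
by rewrite linearZ !mxE mulrC.
Qed.

Definition hpart N (A : 'M[C]_N) : 'M[C]_N := 2^-1 *: (A + adjmx A).

Lemma half_conj : (2^-1 : C)^* = 2^-1.
Proof. by rewrite geC0_conj // invr_ge0 ler0n. Qed.

Lemma hpart_herm N (A : 'M[C]_N) : adjmx (hpart A) = hpart A.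
Proof. by rewrite /hpart adjmxZ adjmxD adjmxK half_conj addrC. Qed.

Lemma tr_hpart N (A X : 'M[C]_N) : adjmx X = X -> 0 <= \tr (A *m X) ->
  \tr (hpart A *m X) = \tr (A *m X).
Proof.
move=> hX h; rewrite /hpart -scalemxAl mulmxDl linearZ linearD /=.
rewrite tr_adj_herm // geC0_conj //.
set y := \tr (A *m X); by rewrite -mulr2n -[y *+ 2]mulr_natl mulrA mulVf ?mul1r // pnatr_eq0.
Qed.


Lemma F11E (M : R) : battery_pi M i1 i1 = Complex (M^-1) 0.
Proof. by rewrite mxE. Qed.

Lemma partB N (n : nat) (r : R) (P E : set 'M[C]_N) (eps : R) :
  P `<=` @density R N -> E `<=` @density R N -> 0 < r ->
  (0 <= eps <= 1 /\ exists F : {linear 'M[C]_N -> 'M[C]_2}, cptp F /\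
      (forall rho, P rho -> tdist (F rho) (ket1proj R) <= eps) /\
      (forall tau, E tau -> battery_Pi (2 `^ (n%:R * r)) (F tau))) ->
  exists t, (exists Em : 'M[C]_N, lownerle 0 Em /\ lownerle Em 1%:M /\
    (forall tau, E tau -> complex.Re (\tr (Em *m tau)) <= 2 `^ (- (n%:R * r))) /\
    t = sup [set complex.Re (\tr ((1%:M - Em) *m rho)) | rho in P]) /\ t <= eps.
Proof.
move=> hP hE r0 [/andP[e0 e1] [F [cpF [hF hFE]]]].
set Em := hpart (Emat F).
have key : forall X, psdmx X -> \tr (Em *m X) = F X i1 i1.
  move=> X pX; rewrite tr_hpart ?psd_herm // tr_Emat //.
  by apply: psd_diag; apply: cp_pos.
have trF : forall X, \tr X = F X i0 i0 + F X i1 i1.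
  by move=> X; rewrite -tr2E; case: cpF => _ ->.
exists (sup [set complex.Re (\tr ((1%:M - Em) *m rho)) | rho in P]); split.
  exists Em; split; [|split; [|split]] => //.
  - rewrite /lownerle subr0; apply: psdP; first exact: hpart_herm.
    move=> v; rewrite qf_tr (key _ (psd_outer v)).
    by apply: psd_diag; apply: cp_pos => //; apply: psd_outer.
  - rewrite /lownerle; apply: psdP; first by rewrite adjmxB adjmx1 hpart_herm.
    move=> v; rewrite qf_tr mulmxBl mul1mx linearB /= (key _ (psd_outer v)).
    rewrite trF addrK.
    by apply: psd_diag; apply: cp_pos => //; apply: psd_outer.
  - move=> tau Et; have [pt tt] := hE _ Et.
    rewrite key //; have [M' [MM' ->]] := hFE _ Et; rewrite F11E /=.
    have M0 : 0 < 2 `^ (n%:R * r) :> R by apply: powR_gt0.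
    rewrite powRN lef_pV2 ?posrE //.
    by apply: lt_le_trans MM'.
case: (pselect (exists rho, P rho)) => [[rho0 Pr0]|nP]; last first.
  have -> : [set complex.Re (\tr ((1%:M - Em) *m rho)) | rho in P] = set0.
    by apply/seteqP; split => x // [rho Pr _]; case: nP; exists rho.
  by rewrite sup0.
apply: ge_sup; first by exists (complex.Re (\tr ((1%:M - Em) *m rho0))), rho0.
move=> _ [rho Pr <-]; have [pr tr] := hP _ Pr.
rewrite mulmxBl mul1mx linearB /= key // trF addrK.
apply: le_trans (hF _ Pr); apply: tdist_lb; first exact: cp_pos.
by case: cpF => _ ->.
Qed.


Local Notation "x %:CR" := (real_complex R x) (at level 2, format "x %:CR").

Lemma ge0_realC (z : C) : 0 <= z -> z = (complex.Re z)%:CR.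
Proof. by move=> z0; rewrite RRe_real // ger0_real. Qed.

Lemma V_bounds N (P : set 'M[C]_N) (Em : 'M[C]_N) :
  P `<=` @density R N -> lownerle 0 Em -> lownerle Em 1%:M ->
  forall rho, P rho -> 0 <= complex.Re (\tr ((1%:M - Em) *m rho)) <= 1.
Proof.
move=> hP l0 l1 rho Pr; have [pr tr] := hP _ Pr.
have pEm : psdmx Em by move: l0; rewrite /lownerle subr0.
apply/andP; split.
  by have := leC_Re (tr_psd l1 pr).
rewrite mulmxBl mul1mx linearB /= tr raddfB /=.
rewrite lerBlDr lerDl.
by have := leC_Re (tr_psd pEm pr).
Qed.

Lemma sup_bounds N (P : set 'M[C]_N) (Em : 'M[C]_N) :
  P `<=` @density R N -> lownerle 0 Em -> lownerle Em 1%:M ->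
  let V := [set complex.Re (\tr ((1%:M - Em) *m rho)) | rho in P] in
  has_ubound V /\ 0 <= sup V <= 1.
Proof.
move=> hP l0 l1 V.
have ub : has_ubound V.
  by exists 1 => _ [rho Pr <-]; have /andP[] := V_bounds hP l0 l1 Pr.
split => //.
case: (pselect (exists rho, P rho)) => [[rho0 Pr0]|nP]; last first.
  have -> : V = set0.
    by apply/seteqP; split => x // [rho Pr _]; case: nP; exists rho.
  by rewrite sup0 lexx ler01.
apply/andP; split.
  have /andP[h _] := V_bounds hP l0 l1 Pr0.
  apply: le_trans h _; apply: ub_le_sup => //; by exists rho0.
apply: ge_sup; first by exists (complex.Re (\tr ((1%:M - Em) *m rho0))), rho0.
by move=> _ [rho Pr <-]; have /andP[] := V_bounds hP l0 l1 Pr.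
Qed.


Lemma mpmapE N (B0 B1 X : 'M[C]_N) :
  [/\ mpmap B0 B1 X i0 i0 = \tr (B0 *m X), mpmap B0 B1 X i1 i1 = \tr (B1 *m X),
      mpmap B0 B1 X i0 i1 = 0 & mpmap B0 B1 X i1 i0 = 0].
Proof. by rewrite !mxE. Qed.

Lemma partA N (n : nat) (r : R) (P E : set 'M[C]_N) (t d : R) :
  P `<=` @density R N -> E `<=` @density R N -> 0 < r ->
  (exists Em : 'M[C]_N, lownerle 0 Em /\ lownerle Em 1%:M /\
    (forall tau, E tau -> complex.Re (\tr (Em *m tau)) <= 2 `^ (- (n%:R * r))) /\
    t = sup [set complex.Re (\tr ((1%:M - Em) *m rho)) | rho in P]) ->
  0 < d <= 1 ->
  exists eps, (0 <= eps <= 1 /\ exists F : {linear 'M[C]_N -> 'M[C]_2}, cptp F /\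
      (forall rho, P rho -> tdist (F rho) (ket1proj R) <= eps) /\
      (forall tau, E tau -> battery_Pi (2 `^ (n%:R * r)) (F tau))) /\ eps <= t + d.
Proof.
move=> hP hE r0 [Em [l0 [l1 [hT et]]]] /andP[d0 d1].
have [ub /andP[t0 t1]] := sup_bounds hP l0 l1; rewrite -et in t0 t1.
set M := 2 `^ (n%:R * r).
have M1 : 1 <= M.
  rewrite /M -{1}(powRr0 2); apply: ler_powR; first by rewrite ler1n.
  by rewrite mulr_ge0 ?ler0n // ltW.
have M0 : 0 < M by apply: lt_le_trans M1.
set q := M^-1.
have q0 : 0 < q by rewrite invr_gt0.
have q1 : q <= 1 by rewrite invf_le1.
rewrite powRN -/M -/q in hT.
have pEm : psdmx Em by move: l0; rewrite /lownerle subr0.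
set E1 := (1 - d)%:CR *: Em + (d * q)%:CR *: 1%:M.
set E0 := 1%:M - E1.
have pE1 : psdmx E1.
  apply: psdD; apply: psdZ => //; last exact: psd1.
    by rewrite ler0c subr_ge0.
  by rewrite ler0c mulr_ge0 // ltW.
have eE0 : E0 = (1 - d)%:CR *: (1%:M - Em) + (d * (1 - q))%:CR *: 1%:M.
  apply/matrixP => i j; rewrite !mxE !rmorphB !rmorphM /= !rmorph1; ring.
have pE0 : psdmx E0.
  rewrite eE0; apply: psdD; apply: psdZ => //; last exact: psd1.
    by rewrite ler0c subr_ge0.
  by rewrite ler0c mulr_ge0 ?subr_ge0 // ltW.
pose F : {linear 'M[C]_N -> 'M[C]_2} :=
  HB.pack (mpmap E0 E1) (GRing.isLinear.Build _ _ _ _ (mpmap E0 E1) (mp_lin E0 E1)).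
have FE : forall X, F X = mpmap E0 E1 X by [].
have trF : forall X, \tr (E0 *m X) + \tr (E1 *m X) = \tr X.
  by move=> X; rewrite -linearD -mulmxDl /E0 subrK mul1mx.
exists ((1 - d) * t + d * (1 - q)); split; last first.
  have h1 : 0 <= d * t by rewrite mulr_ge0 // ltW.
  have h2 : 0 <= d * q by rewrite mulr_ge0 // ltW.
  rewrite mulrBl mulrBr mul1r mulr1; lra.
split.
  apply/andP; split.
    by rewrite addr_ge0 // mulr_ge0 // ?subr_ge0 // ltW.
  have h1 : (1 - d) * t <= 1 - d by rewrite -{2}(mulr1 (1 - d)) ler_wpM2l // subr_ge0.
  have h2 : 0 <= d * q by rewrite mulr_ge0 // ltW.
  rewrite mulrBr mulr1; lra.
exists F; split; [split|split].
- by move=> k X pX; rewrite /=; apply: mp_cp.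
- by move=> X; rewrite FE tr2E; have [-> -> _ _] := mpmapE E0 E1 X.
- move=> rho Pr; have [pr tr] := hP _ Pr.
  have [g00 g11 g01 g10] := mpmapE E0 E1 rho.
  rewrite FE tdist_diag ?g00 ?g11 ?g01 ?g10 ?tr_psd //; last by rewrite tr2E g00 g11 trF.
  set w := \tr ((1%:M - Em) *m rho).
  have w0 : 0 <= w by apply: tr_psd.
  have wt : complex.Re w <= t.
    by rewrite et; apply: ub_le_sup => //; exists rho.
  have -> : \tr (E0 *m rho) = ((1 - d) * complex.Re w + d * (1 - q))%:CR.
    rewrite eE0 mulmxDl linearD -!scalemxAl !linearZ /= mul1mx tr -/w.
    rewrite {1}(ge0_realC w0) !rmorphD !rmorphM /= mulr1.
    by congr (_ * _ + _); rewrite -rmorphD.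
  rewrite /=; apply: lerD => //; apply: ler_wpM2l => //; by rewrite subr_ge0.
- move=> tau Et; have [pt tt] := hE _ Et.
  have x0 : 0 <= \tr (Em *m tau) by apply: tr_psd.
  set xr := complex.Re (\tr (Em *m tau)).
  have xr0 : 0 <= xr by have := leC_Re x0.
  have xrq : xr <= q by apply: hT.
  set y := (1 - d) * xr + d * q.
  have y0 : 0 < y.
    by rewrite /y ltr_wpDl ?mulr_ge0 ?subr_ge0 // mulr_gt0.
  have yq : y <= q.
    apply: (@le_trans _ _ ((1 - d) * q + d * q)); last by rewrite -mulrDl subrK mul1r.
    by rewrite /y lerD2r ler_wpM2l // subr_ge0.
  have ty : \tr (E1 *m tau) = y%:CR.
    rewrite mulmxDl linearD -!scalemxAl !linearZ /= mul1mx tt mulr1.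
    by rewrite {1}(ge0_realC x0) -/xr -rmorphM -rmorphD.
  exists y^-1; split.
    by rewrite -/M -[M]invrK lef_pV2 ?posrE ?invr_gt0.
  have [g00 g11 g01 g10] := mpmapE E0 E1 tau.
  apply: mx2P; rewrite FE ?g00 ?g11 ?g01 ?g10 !mxE //= invrK.
    rewrite -[\tr (E0 *m tau)](addrK (\tr (E1 *m tau))) trF tt ty.
    by rewrite [RHS](_ : _ = (1 - y)%:CR) // rmorphB rmorph1.
  by rewrite ty.
Qed.

End S.

Unset Implicit Arguments.
Local Close Scope sesquilinear_scope.

(* H = C^d, so H^{(x) n} = C^(d^n). *)
Theorem propositionS5 (R : realType) (d n : nat)
    (P E : set 'M[R[i]]_(d ^ n)) (r : R) :
  P `<=` @density R (d ^ n) -> E `<=` @density R (d ^ n) -> 0 < r ->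
  zeta_GPO n r P E = alpha_err n r P E.
Proof.
move=> hP hE r0; rewrite /zeta_GPO /alpha_err.
set Sz := [set eps : R | _]; set Sa := [set t : R | _].
have Sa_lb : forall t, Sa t -> 0 <= t.
  move=> t [Em [l0 [l1 [_ ->]]]].
  by have [_ /andP[]] := sup_bounds hP l0 l1.
have [t0 Sa0] : exists t, Sa t.
  eexists; exists 0; split; [|split; [|split]].
  - by rewrite /lownerle subrr; apply: psd0.
  - by rewrite /lownerle subr0; apply: psd1.
  - by move=> tau _; rewrite mul0mx linear0 /= powR_ge0.
  - by [].
have Sz_lb : forall eps, Sz eps -> 0 <= eps by move=> eps [/andP[]].
have hSz : has_lbound Sz by exists 0.
have hSa : has_lbound Sa by exists 0.
have d01 : 0 < (1 : R) <= 1 by apply/andP; split; [exact: ltr01|exact: lexx].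
have [eps0 [Sz0 _]] := partA hP hE r0 Sa0 d01.
apply/eqP; rewrite eq_le; apply/andP; split.
  apply: lb_le_inf; first by exists t0.
  move=> t St; apply/ler_addgt0Pr => e e0.
  have dd : 0 < Order.min e 1 <= 1 by rewrite lt_min e0 ltr01 ge_min lexx orbT.
  have [eps [Seps le]] := partA hP hE r0 St dd.
  apply: le_trans (ge_inf hSz Seps) _; apply: le_trans le _.
  by rewrite lerD2l ge_min lexx.
apply: lb_le_inf; first by exists eps0.
move=> eps Seps; have [t [St te]] := partB hP hE r0 Seps.
exact: le_trans (ge_inf hSa St) te.
Qed.
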